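(* Let $\mathcal W$ be an operator space, $X\in\mathcal W^{n\times n}$, $X'\in\mathcal W^{n'\times n'}$, and let $M,M'\in\mathbb N$ be such that $Mn=M'n'$ is the least common multiple of $n$ and $n'$. Then $\bigl\|\bigoplus_{\alpha=1}^MX-\bigoplus_{\beta=1}^{M'}X'\bigr\|_{Mn}=0$ if and only if there exists $Y\in\mathcal W^{d\times d}$ for some $d$, and $m,m'\in\mathbb N$, such that $X=\bigoplus_{\alpha=1}^mY$ and $X'=\bigoplus_{\beta=1}^{m'}Y$.
   Context: An operator space is a complex Banach space $\mathcal W$ with norms $\|\cdot\|_n$ on $\mathcal W^{n\times n}$ such that $\|X\oplus Y\|_{n+m}=\max\{\|X\|_n,\|Y\|_m\}$ and $\|TXS\|_n\le\|T\|\|X\|_n\|S\|$ for $T,S\in\mathbb C^{n\times n}$, where $X\oplus Y=\begin{bmatrix}X&0\\0&Y\end{bmatrix}$ and $\bigoplus_{\alpha=1}^mY$ denotes the block diagonal matrix with $m$ diagonal blocks equal to $Y$. *)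

(* Defs.v *)
From HB Require Import structures.
From mathcomp Require Import all_boot all_order all_algebra.
From mathcomp Require Import complex.
From mathcomp Require Import classical_sets reals.

Set Implicit Arguments.
Unset Strict Implicit.
Unset Printing Implicit Defensive.

Import Order.TTheory GRing.Theory Num.Theory.
Local Open Scope ring_scope.
Local Open Scope classical_set_scope.

Section OperatorSpaceDefs.
Variable R : realType.
Local Notation C := R[i].

Definition cmod (c : C) : R := Num.sqrt (@complex.Re R c ^+ 2 + @complex.Im R c ^+ 2).

Definition vnorm n (v : 'cV[C]_n) : R := Num.sqrt (\sum_i cmod (v i 0) ^+ 2).

Definition opnorm n (T : 'M[C]_n) : R :=
  sup [set vnorm (T *m v) | v in [set v : 'cV[C]_n | vnorm v <= 1]].

Variable V : lmodType C.

Definition scalemxV n (c : C) (X : 'M[V]_n) : 'M[V]_n :=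
  \matrix_(i, j) (c *: X i j).

Definition cmulmx n (T : 'M[C]_n) (X : 'M[V]_n) (S : 'M[C]_n) : 'M[V]_n :=
  \matrix_(i, j) \sum_(k < n) \sum_(l < n) (T i k * S l j) *: X k l.

Definition dsum n m (X : 'M[V]_n) (Y : 'M[V]_m) : 'M[V]_(n + m) :=
  block_mx X 0 0 Y.

Definition bdiag_size m d : \sum_(i < m) d = (m * d)%N.
Proof. by rewrite big_const_ord iter_addn_0 mulnC. Qed.

Definition bdiag m d (Y : 'M[V]_d) : 'M[V]_(m * d) :=
  castmx (bdiag_size m d, bdiag_size m d) (\mxdiag_(i < m) Y).

End OperatorSpaceDefs.

(* A complex operator space: a complex Banach space W together with norms
   ||.||_n on W^{n x n} satisfying Ruan's axioms. *)
Record operator_space (R : realType) := OperatorSpace {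
  os_carrier :> lmodType R[i];
  os_norm : forall n, 'M[os_carrier]_n -> R;
  os_norm_ge0 : forall n (X : 'M[os_carrier]_n), 0 <= os_norm X;
  os_norm_eq0 : forall n (X : 'M[os_carrier]_n), os_norm X = 0 -> X = 0;
  os_normZ : forall n (c : R[i]) (X : 'M[os_carrier]_n),
      os_norm (scalemxV c X) = cmod c * os_norm X;
  os_normD : forall n (X Y : 'M[os_carrier]_n),
      os_norm (X + Y) <= os_norm X + os_norm Y;
  os_complete : forall u : nat -> os_carrier,
      (forall e : R, 0 < e -> exists N, forall p q, (N <= p)%N -> (N <= q)%N ->
         os_norm (const_mx (u p - u q) : 'M_1) < e) ->
      exists l : os_carrier, forall e : R, 0 < e -> exists N, forall p, (N <= p)%N ->
         os_norm (const_mx (u p - l) : 'M_1) < e;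
  os_norm_dsum : forall n m (X : 'M[os_carrier]_n) (Y : 'M[os_carrier]_m),
      os_norm (dsum X Y) = Num.max (os_norm X) (os_norm Y);
  os_norm_mul : forall n (T S : 'M[R[i]]_n) (X : 'M[os_carrier]_n),
      os_norm (cmulmx T X S) <= opnorm T * os_norm X * opnorm S
}.

(* Main.v *)
Require Import Defs.
From HB Require Import structures.
From mathcomp Require Import all_boot all_order all_algebra.
From mathcomp Require Import complex.
From mathcomp Require Import classical_sets reals.
From mathcomp Require Import zify.
Import Order.TTheory GRing.Theory Num.Theory.
Local Open Scope ring_scope.
Set Implicit Arguments. Unset Strict Implicit.
Section Aux.
Variable R : realType.
Variable V : lmodType R[i].

Definition ent d (Y : 'M[V]_d) (a b : nat) : V :=
  match @insub _ (fun x => x < d)%N _ a, @insub _ (fun x => x < d)%N _ b with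
  | Some i, Some j => Y i j | _, _ => 0 end.

Lemma entE d (Y : 'M[V]_d) (i j : 'I_d) : ent Y i j = Y i j.
Proof. by rewrite /ent !valK. Qed.

Lemma sig_decomp m d (s : 'I_(\sum_(i < m) d)) :
  (s : nat) = (tagnat.sig1 s * d + tagnat.sig2 s)%N.
Proof.
rewrite {1}(tagnat.rect s); congr (_ + _)%N.
rewrite (big_ord_narrow (ltnW (ltn_ord (tagnat.sig1 s)))).
by rewrite sum_nat_const card_ord.
Qed.

Lemma bdiagE m d (Y : 'M[V]_d) (i j : 'I_(m * d)) :
  bdiag m Y i j = if (i %/ d == j %/ d)%N then ent Y (i %% d) (j %% d) else 0.
Proof.
rewrite /bdiag castmxE /mxdiag /mxblock mxE.
set s := cast_ord _ i; set t := cast_ord _ j.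
have hi : (i : nat) = s by []. have hj : (j : nat) = t by [].
have hs := sig_decomp s; have ht := sig_decomp t.
have d0 : (0 < d)%N.
  have : (i < m * d)%N := ltn_ord i; move: (nat_of_ord i) => k.
  by rewrite lt0n; apply: contraTN => /eqP ->; rewrite muln0.
have e1 : (i %/ d)%N = tagnat.sig1 s.
  by rewrite hi hs divnMDl // (divn_small (ltn_ord (tagnat.sig2 s))) addn0.
have e2 : (j %/ d)%N = tagnat.sig1 t.
  by rewrite hj ht divnMDl // (divn_small (ltn_ord (tagnat.sig2 t))) addn0.
have e3 : (i %% d)%N = tagnat.sig2 s.
  by rewrite hi hs modnMDl // (modn_small (ltn_ord (tagnat.sig2 s))).
have e4 : (j %% d)%N = tagnat.sig2 t.
  by rewrite hj ht modnMDl // (modn_small (ltn_ord (tagnat.sig2 t))).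
rewrite e1 e2 e3 e4 (inj_eq val_inj).
case: eqP => _; last by rewrite mxE.
by rewrite conform_mx_id entE.
Qed.


End Aux.
Section Core.
Variable V : zmodType.
Variables (n n' : nat) (F F' : nat -> nat -> V).
Hypotheses (n0 : (0 < n)%N) (n'0 : (0 < n')%N).
Local Notation L := (lcmn n n').
Local Notation g := (gcdn n n').
Definition fb k (G : nat -> nat -> V) a b : V :=
  if (a %/ k == b %/ k)%N then G (a %% k)%N (b %% k)%N else 0.
Hypothesis H : forall a b, (a < L)%N -> (b < L)%N -> fb n F a b = fb n' F' a b.

Lemma g0 : (0 < g)%N. Proof. by rewrite gcdn_gt0 n0. Qed.

Lemma exc : (g < n)%N -> exists2 c, (c + n - g <= L)%N & (n' %| c)%N /\ (c %% n = g)%N.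
Proof.
move=> gn.
case: (egcdnP n n'0) => km kn def _.
have L0 : (0 < L)%N by rewrite lcmn_gt0 n0.
have nL : (n %| L)%N by apply: dvdn_lcml.
have n'L : (n' %| L)%N by apply: dvdn_lcmr.
set c := ((km * n') %% L)%N.
have cmod : (c %% n = g)%N.
  by rewrite /c modn_dvdm // def modnMDl gcdnC modn_small.
exists c; last split.
- have cL : (c < L)%N by rewrite ltn_mod.
  have := divn_eq c n; rewrite cmod => ec.
  have : (c %/ n * n < L)%N by apply: leq_ltn_trans cL; rewrite {2}ec leq_addr.
  move: nL => /dvdnP [M eM]; rewrite eM ltn_pmul2r // => kM.
  have -> : (c + n - g = c %/ n * n + n)%N by rewrite {1}ec; lia.
  by rewrite -mulSnr leq_pmul2r.
- by rewrite /dvdn /c modn_dvdm // modnMl.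
- exact: cmod.
Qed.

Lemma fb_off k G q x y : (x < k)%N -> (y < k)%N -> fb k G (q * k + x) (q * k + y) = G x y.
Proof.
move=> xk yk; have k0 : (0 < k)%N by apply: leq_ltn_trans xk.
by rewrite /fb !divnMDl // !divn_small // !modnMDl !modn_small // eqxx.
Qed.

Lemma fb_shift k G q a b : (0 < k)%N -> fb k G (q * k + a) (q * k + b) = fb k G a b.
Proof. by move=> k0; rewrite /fb !divnMDl // !modnMDl eqn_add2l. Qed.

Lemma fb_ne k G a b : (a %/ k != b %/ k)%N -> fb k G a b = 0.
Proof. by move=> h; rewrite /fb (negbTE h). Qed.

Lemma nL : (n <= L)%N. Proof. by apply: dvdn_leq; rewrite ?lcmn_gt0 ?n0 ?dvdn_lcml. Qed.

Lemma shift1 i j : (i + g < n)%N -> (j + g < n)%N -> F (i + g) (j + g) = F i j.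
Proof.
move=> ig jg; have gn : (g < n)%N by apply: leq_ltn_trans ig; rewrite leq_addl.
have [c hcL [hn' hcn]] := exc gn.
have hc' : c = (c %/ n' * n')%N by rewrite divnK.
have hck : c = (c %/ n * n + g)%N by rewrite {1}(divn_eq c n) hcn.
have H1 : fb n F (c + i) (c + j) = fb n' F' (c + i) (c + j) by apply: H; lia.
have H2 : fb n F i j = fb n' F' i j by apply: H; apply: leq_trans nL; lia.
set k := (c %/ n)%N in hck; set q := (c %/ n')%N in hc'.
clearbody k q.
have H3 : fb n' F' (c + i) (c + j) = fb n' F' i j by rewrite hc' fb_shift.
have H4 : fb n F (c + i) (c + j) = F (i + g) (j + g).
  by rewrite hck -!addnA [(g + i)%N]addnC [(g + j)%N]addnC fb_off.
rewrite -H4 H1 H3 -H2 -(@fb_off n F 0) ?mul0n ?add0n //; lia.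
Qed.

Lemma zero1 p j : (p < g)%N -> (g <= j)%N -> (j < n)%N -> F p j = 0 /\ F j p = 0.
Proof.
move=> pg gj jn; have gn : (g < n)%N by apply: leq_ltn_trans jn.
have [c hcL [hn' hcn]] := exc gn.
have hc' : c = (c %/ n' * n')%N by rewrite divnK.
have hck : c = (c %/ n * n + g)%N by rewrite {1}(divn_eq c n) hcn.
set k := (c %/ n)%N in hck; set q := (c %/ n')%N in hc'.
clearbody k q.
have lt1 : (( k * n + p) %/ n' < q)%N by rewrite ltn_divLR // -hc' hck ltn_add2l.
have le1 : (q <= ( k * n + j) %/ n')%N by rewrite leq_divRL // -hc' hck leq_add2l.
have knL : (k * n + n <= L)%N.
  by move: hcL; rewrite {1}hck -addnA [(g + n)%N]addnC addnA addnK.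
have ne : ((k * n + p) %/ n' != (k * n + j) %/ n')%N.
  by rewrite neq_ltn (leq_trans lt1 le1).
have bL : (k * n + j < L)%N by apply: leq_trans knL; rewrite ltn_add2l.
have aL : (k * n + p < L)%N.
  by apply: leq_trans knL; rewrite ltn_add2l (ltn_trans pg gn).
have pn := ltn_trans pg gn.
split.
- rewrite -(@fb_off n F k p j pn jn) (H aL bL).
  exact: fb_ne.
- rewrite -(@fb_off n F k j p jn pn) (H bL aL).
  by apply: fb_ne; rewrite eq_sym.
Qed.

Lemma shiftk k i j : (i + k * g < n)%N -> (j + k * g < n)%N ->
  F (i + k * g) (j + k * g) = F i j.
Proof.
elim: k => [|k IH] hi hj; first by rewrite !mul0n !addn0.
rewrite mulSnr !addnA in hi hj *.
rewrite shift1 // IH //.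
- by apply: leq_ltn_trans hi; rewrite leq_addr.
- by apply: leq_ltn_trans hj; rewrite leq_addr.
Qed.

Lemma coreF i j : (i < n)%N -> (j < n)%N -> F i j = fb g F i j.
Proof.
move=> ih jh; rewrite /fb.
have gi := ltn_pmod i g0; have gj := ltn_pmod j g0.
have ei : i = (i %% g + i %/ g * g)%N by rewrite addnC -divn_eq.
have ej : j = (j %% g + j %/ g * g)%N by rewrite addnC -divn_eq.
have ih' : (i %% g + i %/ g * g < n)%N by rewrite -ei.
have jh' : (j %% g + j %/ g * g < n)%N by rewrite -ej.
rewrite [in LHS]ei [in LHS]ej; move: ih' jh'; clear ei ej ih jh.
move: (i %/ g)%N (j %/ g)%N (i %% g)%N (j %% g)%N gi gj => qi qj ri rj gi gj ih jh.
have key : forall r s a b, (r < g)%N -> (s < g)%N -> (a < b)%N ->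
    (r + a * g < n)%N -> (s + b * g < n)%N -> F (r + a * g) (s + b * g) = 0 /\ F (s + b * g) (r + a * g) = 0.
  move=> r s0 a b rg sg ab ha hb.
  have e : (s0 + b * g = (s0 + (b - a) * g) + a * g)%N by rewrite -addnA -mulnDl subnK // ltnW.
  have hb' : (s0 + (b - a) * g < n)%N.
    by apply: leq_ltn_trans hb; rewrite e leq_addr.
  rewrite e !shiftk -?e //; apply: zero1 => //.
  apply: leq_trans (leq_addl _ _); rewrite -{1}[g]mul1n leq_mul2r subn_gt0 ab orbT //.
case: ltngtP => h.
- by case: (key ri rj qi qj).
- by case: (key rj ri qj qi).
- by rewrite -h shiftk // h.
Qed.

End Core.

Section Glue.
Variable R : realType.
Variable V : lmodType R[i].

Lemma ent_ord k (Z : 'M[V]_k) a b (ha : (a < k)%N) (hb : (b < k)%N) :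
  ent Z a b = Z (Ordinal ha) (Ordinal hb).
Proof. exact: (entE Z (Ordinal ha) (Ordinal hb)). Qed.

Lemma castbdiagE m d k (e : (m * d)%N = k) (Y : 'M[V]_d) (a b : 'I_k) :
  castmx (e, e) (bdiag m Y) a b = fb d (ent Y) a b.
Proof. by rewrite castmxE bdiagE. Qed.

Lemma fb_small k (G : nat -> nat -> V) a b : (a < k)%N -> (b < k)%N -> fb k G a b = G a b.
Proof. by move=> ha hb; rewrite /fb !divn_small // !modn_small // eqxx. Qed.

Lemma nested m d k (e : (m * d)%N = k) (Y : 'M[V]_d) a b : (0 < k)%N ->
  fb k (ent (castmx (e, e) (bdiag m Y))) a b = fb d (ent Y) a b.
Proof.
move=> k0.
have d0 : (0 < d)%N by move: k0; rewrite -e muln_gt0 => /andP[].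
have dk : (d %| k)%N by rewrite -e dvdn_mull.
have ka := ltn_pmod a k0; have kb := ltn_pmod b k0.
have ea : (a %/ d = a %/ k * m + (a %% k) %/ d)%N.
  by rewrite {1}(divn_eq a k) -{2}e mulnA divnMDl.
have eb : (b %/ d = b %/ k * m + (b %% k) %/ d)%N.
  by rewrite {1}(divn_eq b k) -{2}e mulnA divnMDl.
rewrite {1}/fb (ent_ord _ ka kb) castbdiagE /=.
case: eqP => h.
- rewrite /fb ea eb h eqn_add2l !modn_dvdm //.
- rewrite /fb ifF //; apply/eqP => h2; apply: h.
  by rewrite -e (mulnC m d) !divnMA h2.
Qed.
End Glue.

Theorem proposition7p14 (R : realType) (W : operator_space R)
    (n n' : nat) (X : 'M[W]_n) (X' : 'M[W]_n') (M M' : nat)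
    (hM : (M * n)%N = lcmn n n') (hM' : (M' * n')%N = lcmn n n') :
  os_norm (castmx (hM, hM) (bdiag M X) - castmx (hM', hM') (bdiag M' X')) = 0
  <->
  exists (d : nat) (Y : 'M[W]_d) (m m' : nat)
         (e : (m * d)%N = n) (e' : (m' * d)%N = n'),
    X = castmx (e, e) (bdiag m Y) /\ X' = castmx (e', e') (bdiag m' Y).
Proof.
split.
- move=> h0.
  have eqA : castmx (hM, hM) (bdiag M X) = castmx (hM', hM') (bdiag M' X').
    by apply/eqP; rewrite -subr_eq0; apply/eqP; apply: os_norm_eq0.
  have H : forall a b, (a < lcmn n n')%N -> (b < lcmn n n')%N ->
      fb n (ent X) a b = fb n' (ent X') a b.
    move=> a b ha hb.
    have := congr1 (fun Z : 'M_(lcmn n n') => Z (Ordinal ha) (Ordinal hb)) eqA.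
    by rewrite /= !castbdiagE.
  have [n0|np] := posnP n.
    have e : (0 * n')%N = n by rewrite mul0n n0.
    have e' : (1 * n')%N = n' by rewrite mul1n.
    exists n', X', 0%N, 1%N, e, e'; split.
      by apply/matrixP => i; have := ltn_ord i; rewrite {2}n0.
    by apply/matrixP => i j; rewrite castbdiagE fb_small // entE.
  have [n0|n'p] := posnP n'.
    have e : (1 * n)%N = n by rewrite mul1n.
    have e' : (0 * n)%N = n' by rewrite mul0n n0.
    exists n, X, 1%N, 0%N, e, e'; split.
      by apply/matrixP => i j; rewrite castbdiagE fb_small // entE.
    by apply/matrixP => i; have := ltn_ord i; rewrite {2}n0.
  have Lp : (0 < lcmn n n')%N by rewrite lcmn_gt0 np.
  have nL : (n <= lcmn n n')%N by apply: dvdn_leq; rewrite ?dvdn_lcml.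
  have n'L : (n' <= lcmn n n')%N by apply: dvdn_leq; rewrite ?dvdn_lcmr.
  have g0 : (0 < gcdn n n')%N by rewrite gcdn_gt0 np.
  have gn : (gcdn n n' <= n)%N by apply: dvdn_leq; rewrite ?dvdn_gcdl.
  have gn' : (gcdn n n' <= n')%N by apply: dvdn_leq; rewrite ?dvdn_gcdr.
  pose Y : 'M[W]_(gcdn n n') := \matrix_(p, q) ent X p q.
  have eY : forall a b, (a < gcdn n n')%N -> (b < gcdn n n')%N -> ent Y a b = ent X a b.
    by move=> a b ha hb; rewrite (ent_ord _ ha hb) mxE.
  have eXX : forall a b, (a < gcdn n n')%N -> (b < gcdn n n')%N -> ent X a b = ent X' a b.
    move=> a b ha hb.
    have ha1 := leq_trans ha gn; have hb1 := leq_trans hb gn.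
    have ha2 := leq_trans ha gn'; have hb2 := leq_trans hb gn'.
    rewrite -(fb_small (ent X) ha1 hb1) H ?fb_small //.
    - exact: leq_trans ha1 nL.
    - exact: leq_trans hb1 nL.
  have H' : forall a b, (a < lcmn n' n)%N -> (b < lcmn n' n)%N ->
      fb n' (ent X') a b = fb n (ent X) a b.
    by move=> a b; rewrite lcmnC => ha hb; rewrite H.
  exists (gcdn n n'), Y, (n %/ gcdn n n')%N, (n' %/ gcdn n n')%N,
    (divnK (dvdn_gcdl n n')), (divnK (dvdn_gcdr n n')); split.
  + apply/matrixP => i j; rewrite castbdiagE -entE (coreF np n'p H) //.
    rewrite /fb; case: ifP => // _; rewrite eY ?ltn_pmod //.
  + apply/matrixP => i j; rewrite castbdiagE -entE (coreF n'p np H') //.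
    rewrite /fb gcdnC; case: ifP => // _; rewrite eY ?ltn_pmod // eXX ?ltn_pmod //.
- move=> [d [Y [m [m' [e [e' [hX hX']]]]]]].
  have eqA : castmx (hM, hM) (bdiag M X) = castmx (hM', hM') (bdiag M' X').
    apply/matrixP => a b; rewrite !castbdiagE.
    have Lp : (0 < lcmn n n')%N by apply: leq_ltn_trans (ltn_ord a).
    move: Lp; rewrite lcmn_gt0 => /andP [np n'p].
    by rewrite hX hX' !nested.
  rewrite eqA subrr.
  have := os_normZ (0 : R[i]) (0 : 'M[W]_(lcmn n n')).
  have -> : scalemxV 0 (0 : 'M[W]_(lcmn n n')) = 0.
    by apply/matrixP => i j; rewrite !mxE scale0r.
  move=> ->; rewrite /cmod /= expr0n /= addr0 sqrtr0 mul0r //.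
Qed.
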